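(* Let $P$ be a finite poset and let $\varphi:P\to P$ satisfy $\varphi\circ\varphi=\mathrm{id}_P$ and $x\le y\iff\varphi(x)\le\varphi(y)$ for all $x,y\in P$. Let $F:=\{x\in P:\varphi(x)=x\}$, regarded as an induced subposet of $P$. If $F$ is a down set of $P$ (i.e., $x\in F$ and $y\le x$ imply $y\in F$), then the parallel union $P+F'$, where $F'$ is a disjoint copy of $F$, is a $\forall$-game; equivalently, $P$ and $F$ are equivalent games, and $g(P)=g(F)$.
   Context: A finite poset $P$ defines a poset game: two players alternate moves; a move consists of choosing a point $x$ of the current poset $Q$ and replacing $Q$ by $Q_x:=\{y\in Q: x\not\le y\}$; the first player unable to move loses. $P$ is an $\exists$-game if the first player has a winning strategy and a $\forall$-game otherwise. The parallel union $P+Q$ of posets is their disjoint union with points of $P$ incomparable to points of $Q$. For finite posets, $P$ and $Q$ are equivalent iff $P+Q$ is a $\forall$-game. The g-number (Grundy number) is defined recursively by $g(P):=\operatorname{mex}\{g(P_x):x\in P\}$, where $\operatorname{mex}A$ is the least natural number not in $A$ (so $g(\emptyset)=0$). *)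

(* Defs.v *)
From mathcomp Require Import all_boot all_order.
Set Implicit Arguments. Unset Strict Implicit. Unset Printing Implicit Defensive.

(* A game position is a finite subset Q of a finite type T, with the order
   given by a relation le (the induced subposet on Q). *)
Section PosetGame.
Variables (T : finType) (le : rel T).

Definition move (Q : {set T}) (x : T) : {set T} := [set y in Q | ~~ le x y].

(* fuel-based recursion; fuel #|Q| suffices since a move removes x (le refl) *)
Fixpoint winf (n : nat) (Q : {set T}) : bool :=
  if n is n'.+1 then [exists x in Q, ~~ winf n' (move Q x)] else false.

Definition exists_game (Q : {set T}) : bool := winf #|Q| Q.
Definition forall_game (Q : {set T}) : bool := ~~ exists_game Q.

Definition mex (s : seq nat) : nat := find (fun n => n \notin s) (iota 0 (size s).+1).

Fixpoint grundyf (n : nat) (Q : {set T}) : nat :=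
  if n is n'.+1 then mex [seq grundyf n' (move Q x) | x <- enum Q] else 0.

Definition grundy (Q : {set T}) : nat := grundyf #|Q| Q.
End PosetGame.

Definition par_le (T1 T2 : finType) (le1 : rel T1) (le2 : rel T2) : rel (T1 + T2) :=
  fun a b => match a, b with
             | inl x, inl y => le1 x y
             | inr x, inr y => le2 x y
             | _, _ => false
             end.

Definition par_set (T1 T2 : finType) (A : {set T1}) (B : {set T2}) : {set T1 + T2} :=
  [set z | match z with inl x => x \in A | inr y => y \in B end].

(* Main.v *)
Require Import Defs.
From mathcomp Require Import all_boot all_order.
Set Implicit Arguments. Unset Strict Implicit. Unset Printing Implicit Defensive.

Lemma mex_has (s : seq nat) : has (fun n => n \notin s) (iota 0 (size s).+1).
Proof.
apply/negPn/negP => /hasPn H.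
have sub : {subset iota 0 (size s).+1 <= s} by move=> k /H; rewrite negbK.
by have := uniq_leq_size (iota_uniq 0 _) sub; rewrite size_iota ltnn.
Qed.

Lemma mex_notin s : mex s \notin s.
Proof.
rewrite /mex; have h := nth_find 0 (mex_has s).
have lt : find (fun n => n \notin s) (iota 0 (size s).+1) < (size s).+1.
  by have := mex_has s; rewrite has_find size_iota.
by rewrite nth_iota // add0n in h.
Qed.

Lemma mex_min s k : k < mex s -> k \in s.
Proof.
rewrite /mex => h; have := before_find 0 h.
have lt : k < (size s).+1.
  apply: (leq_trans h); have := find_size (fun n => n \notin s) (iota 0 (size s).+1).
  by rewrite size_iota.
by rewrite nth_iota // add0n => /negbFE.
Qed.

Lemma mex_uniq s m : m \notin s -> (forall k, k < m -> k \in s) -> mex s = m.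
Proof.
move=> hm hk; case: (ltngtP (mex s) m) => h //.
- by have := hk _ h; rewrite (negbTE (mex_notin s)).
- by have := mex_min h; rewrite (negbTE hm).
Qed.

Lemma move_sub (T : finType) (le : rel T) (Q : {set T}) x : move le Q x \subset Q.
Proof. by apply/subsetP=> y; rewrite inE => /andP[]. Qed.

Lemma move_lt (T : finType) (le : rel T) (refl : reflexive le) (Q : {set T}) x :
  x \in Q -> #|move le Q x| < #|Q|.
Proof.
move=> xQ; apply: proper_card; rewrite properE move_sub /=.
by apply/subsetPn; exists x => //; rewrite inE refl andbF.
Qed.

Lemma ex_empty (T : finType) (Q : {set T}) (P : pred T) :
  #|Q| <= 0 -> [exists x in Q, P x] = false.
Proof.
move=> h; apply/negbTE/existsP => -[x /andP[xQ _]].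
by move: h; rewrite (cardD1 x) xQ.
Qed.

Lemma enum_empty (T : finType) (Q : {set T}) : #|Q| <= 0 -> enum Q = [::].
Proof. by move=> h; apply/nilP; rewrite /nilp -cardE; case: #|Q| h. Qed.

Lemma winf_fuel (T : finType) (le : rel T) (refl : reflexive le) n m (Q : {set T}) :
  #|Q| <= n -> #|Q| <= m -> winf le n Q = winf le m Q.
Proof.
elim: n m Q => [|n IH] [|m] Q //= hn hm.
- by rewrite ex_empty.
- by rewrite ex_empty.
apply: eq_existsb => x; case xQ: (x \in Q) => //=; congr (~~ _).
by apply: IH; rewrite -ltnS (leq_trans (move_lt refl xQ)).
Qed.

Lemma exists_gameE (T : finType) (le : rel T) (refl : reflexive le) (Q : {set T}) :
  exists_game le Q = [exists x in Q, ~~ exists_game le (move le Q x)].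
Proof.
rewrite /exists_game; case e: #|Q| => [|n] /=.
  by rewrite ex_empty ?e.
apply: eq_existsb => x; case xQ: (x \in Q) => //=; congr (~~ _).
by apply: winf_fuel => //; rewrite -ltnS -e (move_lt refl xQ).
Qed.

Lemma grundyf_fuel (T : finType) (le : rel T) (refl : reflexive le) n m (Q : {set T}) :
  #|Q| <= n -> #|Q| <= m -> grundyf le n Q = grundyf le m Q.
Proof.
elim: n m Q => [|n IH] [|m] Q //= hn hm.
- by rewrite enum_empty.
- by rewrite enum_empty.
congr mex; apply/eq_in_map => x; rewrite mem_enum => xQ.
by apply: IH; rewrite -ltnS (leq_trans (move_lt refl xQ)).
Qed.

Lemma grundyE (T : finType) (le : rel T) (refl : reflexive le) (Q : {set T}) :
  grundy le Q = mex [seq grundy le (move le Q x) | x <- enum Q].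
Proof.
rewrite /grundy; case e: #|Q| => [|n] /=.
  by rewrite enum_empty ?e.
congr mex; apply/eq_in_map => x; rewrite mem_enum => xQ.
by apply: grundyf_fuel => //; rewrite -ltnS -e (move_lt refl xQ).
Qed.

Lemma move_inl (T1 T2 : finType) (le1 : rel T1) (le2 : rel T2) A B x :
  move (par_le le1 le2) (par_set A B) (inl x) = par_set (move le1 A x) B.
Proof. by apply/setP => -[y|y]; rewrite !inE //= andbT. Qed.

Lemma move_inr (T1 T2 : finType) (le1 : rel T1) (le2 : rel T2) A B x :
  move (par_le le1 le2) (par_set A B) (inr x) = par_set A (move le2 B x).
Proof. by apply/setP => -[y|y]; rewrite !inE //= andbT. Qed.

Lemma par_refl (T1 T2 : finType) (le1 : rel T1) (le2 : rel T2) :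
  reflexive le1 -> reflexive le2 -> reflexive (par_le le1 le2).
Proof. by move=> r1 r2 [x|x] /=. Qed.

Theorem mainTheorem3 (d : Order.disp_t) (T : finPOrderType d) (phi : T -> T) :
  involutive phi ->
  (forall x y : T, (x <= y)%O = (phi x <= phi y)%O) ->
  (forall x y : T, phi x = x -> (y <= x)%O -> phi y = y) ->
  forall_game (par_le (@Order.le d T) (@Order.le d T))
              (par_set [set: T] [set x : T | phi x == x])
  /\ grundy (@Order.le d T) [set: T] = grundy (@Order.le d T) [set x : T | phi x == x].
Proof.
move=> inv hom down.
set F := [set x : T | phi x == x].
set le := @Order.le d T.
have refl : reflexive le by move=> x; exact: Order.POrderTheory.lexx.
have nle : forall x, x \notin F -> ~~ le x (phi x).
  move=> x; rewrite inE => nx; apply/negP => h; move/eqP: nx; apply.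
  apply: Order.POrderTheory.le_anti; apply/andP; split.
    by rewrite (hom (phi x) x) inv.
  exact: h.
pose invar (Q : {set T}) := forall z, (phi z \in Q) = (z \in Q).
have inv_move : forall Q y, invar Q -> y \in F -> invar (move le Q y).
  move=> Q y hQ; rewrite inE => /eqP fy z; rewrite !inE hQ.
  by rewrite /le (hom y (phi z)) inv fy.
have inv_move2 : forall Q x, invar Q -> invar (move le (move le Q x) (phi x)).
  move=> Q x hQ z; rewrite !inE hQ /le (hom x (phi z)) inv (hom (phi x) (phi z)) !inv.
  by rewrite andbAC.
have F2 : forall Q x, x \notin F -> move le (move le Q x) (phi x) :&: F = Q :&: F.
  move=> Q x nx; apply/setP => z; rewrite !inE.
  case fz: (phi z == z); rewrite ?andbF //= !andbT.
  have h1 : ~~ le x z.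
    apply/negP => h; move: nx; rewrite inE (down _ _ (eqP fz) h).
    by rewrite eqxx.
  have h2 : ~~ le (phi x) z.
    apply/negP => h; move: nx; rewrite inE.
    have e := down _ _ (eqP fz) h; rewrite inv in e.
    by rewrite -{1}e eqxx.
  by rewrite h1 h2 !andbT.
have F1 : forall Q y, y \in F -> move le (Q :&: F) y = move le Q y :&: F.
  by move=> Q y _; apply/setP => z; rewrite !inE andbAC.
have phiQ : forall Q x, invar Q -> x \in Q -> x \notin F -> phi x \in move le Q x.
  by move=> Q x hQ xQ nx; rewrite inE hQ xQ nle.
split.
- suff: forall n (Q : {set T}), #|Q| <= n -> invar Q ->
          ~~ exists_game (par_le le le) (par_set Q (Q :&: F)).
    by move=> /(_ #|[set: T]| [set: T] (leqnn _)); rewrite setTI; apply => z; rewrite !inE.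
  have prefl := par_refl refl refl.
  elim=> [|n IH] Q hn hQ.
    rewrite exists_gameE // ex_empty //.
    suff -> : par_set Q (Q :&: F) = set0 by rewrite cards0.
    apply/setP => -[z|z]; rewrite !inE; move: hn; rewrite leqn0 cards_eq0 => /eqP ->;
      by rewrite inE.
  have IH' : forall R : {set T}, #|R| < #|Q| -> invar R ->
       ~~ exists_game (par_le le le) (par_set R (R :&: F)).
    by move=> R hR; apply: IH; rewrite -ltnS (leq_trans hR).
  have caseF : forall y, y \in Q -> y \in F ->
     exists_game (par_le le le) (move (par_le le le) (par_set Q (Q :&: F)) (inl y)).
    move=> y yQ yF; rewrite exists_gameE //; apply/existsP; exists (inr y).
    rewrite move_inl move_inr (F1 _ _ yF) (IH' _ (move_lt refl yQ) (inv_move _ _ hQ yF)) andbT.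
    by rewrite !inE yQ; move: yF; rewrite inE => ->.
  rewrite exists_gameE //; apply/negP => /existsP [[x|y] /andP [hz /negP]];
    apply; rewrite inE in hz.
  + case xF: (x \in F); first by rewrite caseF.
    rewrite exists_gameE //; apply/existsP; exists (inl (phi x)).
    rewrite move_inl; apply/andP; split; first by rewrite inE phiQ ?xF.
    rewrite move_inl -(F2 Q x) ?xF // (IH' _ _ (inv_move2 _ _ hQ)) //.
    apply: (leq_ltn_trans (subset_leq_card (move_sub _ _ _))).
    exact: move_lt.
  + move: hz; rewrite in_setI => /andP [yQ yF].
    rewrite exists_gameE //; apply/existsP; exists (inl y).
    rewrite move_inr; apply/andP; split; first by rewrite !inE yQ.
    by rewrite move_inl (F1 _ _ yF) (IH' _ (move_lt refl yQ) (inv_move _ _ hQ yF)).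
- suff: forall n (Q : {set T}), #|Q| <= n -> invar Q -> grundy le Q = grundy le (Q :&: F).
    by move=> /(_ #|[set: T]| [set: T] (leqnn _)); rewrite setTI; apply => z; rewrite !inE.
  elim=> [|n IH] Q hn hQ.
    move: hn; rewrite leqn0 cards_eq0 => /eqP ->; by rewrite set0I.
  have IH' : forall R : {set T}, #|R| < #|Q| -> invar R -> grundy le R = grundy le (R :&: F).
    by move=> R hR; apply: IH; rewrite -ltnS (leq_trans hR).
  rewrite grundyE // [grundy le (Q :&: F)]grundyE //.
  set s' := [seq grundy le (move le (Q :&: F) x0) | x0 <- enum (Q :&: F)].
  apply: mex_uniq.
  + apply/mapP => -[x]; rewrite mem_enum => xQ.
    case xF: (x \in F).
      rewrite (IH' _ (move_lt refl xQ) (inv_move _ _ hQ xF)) -(F1 _ _ xF) => e.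
      have := mex_notin s'.
      rewrite e; case/negP; apply/mapP; exists x => //.
      by rewrite mem_enum inE xQ xF.
    rewrite (grundyE refl (move le Q x)) => e.
    have := mex_notin [seq grundy le (move le (move le Q x) x0) | x0 <- enum (move le Q x)].
    rewrite -e; case/negP; apply/mapP; exists (phi x).
      by rewrite mem_enum phiQ ?xF.
    rewrite IH' ?F2 ?xF //; last exact: inv_move2.
      by rewrite (grundyE refl (Q :&: F)).
    apply: (leq_ltn_trans (subset_leq_card (move_sub _ _ _))); exact: move_lt.
  + move=> k /mex_min /mapP [y]; rewrite mem_enum in_setI => /andP [yQ yF] ->.
    apply/mapP; exists y; first by rewrite mem_enum.
    by rewrite (F1 _ _ yF) (IH' _ (move_lt refl yQ) (inv_move _ _ hQ yF)).
Qed.
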